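(* Let $\alpha\in(0,1/2)$. There exist constants $c,C>0$ depending only on $\alpha$ such that for every irreducible discrete-time Markov chain on a finite state space, \[ c\, t_{\mathrm{mov}}(\alpha)\le t_{\mathrm{mix}}\le C\, t_{\mathrm{mov}}(\alpha). \]
   Context: Let $(X_t)_{t\ge0}$ be an irreducible discrete-time Markov chain on a finite state space $\Omega$ with transition matrix $P$ and stationary distribution $\pi$; write $P^t(x,y)=\mathbb{P}_x(X_t=y)$. Let $d(t)=\max_x\|P^t(x,\cdot)-\pi\|$, where $\|\mu-\nu\|$ is the total variation distance, and $t_{\mathrm{mix}}(\epsilon)=\min\{t\ge0: d(t)\le\epsilon\}$, $t_{\mathrm{mix}}=t_{\mathrm{mix}}(1/4)$. For $\alpha\in(0,1)$ let $\mathcal{A}(\alpha)$ be the set of sequences $A=(A_t)_{t\ge0}$ of subsets of $\Omega$ with $\pi(A_t)\ge\alpha$ for all $t$; for such $A$ let $\tau_A=\inf\{t\ge0: X_t\in A_t\}$, and define $t_{\mathrm{mov}}(\alpha)=\sup_{x\in\Omega,\,A\in\mathcal{A}(\alpha)}\mathbb{E}_x[\tau_A]$. *)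

(* Defs.v *)
From HB Require Import structures.
From mathcomp Require Import all_boot all_order all_algebra.
From mathcomp Require Import all_classical all_reals all_analysis.
Set Implicit Arguments. Unset Strict Implicit. Unset Printing Implicit Defensive.
Import Order.TTheory GRing.Theory Num.Theory.
Local Open Scope ring_scope.

Section MC.
Variables (R : realType) (S : finType).

Definition stochastic (P : S -> S -> R) : Prop :=
  (forall x y, 0 <= P x y) /\ (forall x, \sum_(y : S) P x y = 1).

Fixpoint Pow (P : S -> S -> R) (t : nat) : S -> S -> R :=
  match t with
  | 0 => fun x y => (x == y)%:R
  | t'.+1 => fun x y => \sum_(z : S) Pow P t' x z * P z y
  end.

Definition irreducible (P : S -> S -> R) : Prop :=
  forall x y, exists t, 0 < Pow P t x y.

Definition stationary (P : S -> S -> R) (pi : S -> R) : Prop :=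
  (forall x, 0 <= pi x) /\ (\sum_(x : S) pi x = 1) /\
  (forall y, \sum_(x : S) pi x * P x y = pi y).

Definition tv (mu nu : S -> R) : R := 2^-1 * \sum_(y : S) `|mu y - nu y|.

Definition dist_t (P : S -> S -> R) (pi : S -> R) (t : nat) : R :=
  \big[Num.max/0]_(x : S) tv (Pow P t x) pi.

(* t_mix(eps) = min { t >= 0 : d(t) <= eps }  (= +oo if the set is empty) *)
Definition tmix_eps (P : S -> S -> R) (pi : S -> R) (eps : R) : \bar R :=
  ereal_inf [set (t%:R)%:E | t in [set t : nat | dist_t P pi t <= eps]].

Definition tmix (P : S -> S -> R) (pi : S -> R) : \bar R := tmix_eps P pi (4^-1).

Definition mass (pi : S -> R) (A : {set S}) : R := \sum_(y in A) pi y.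

(* r t y = P_x( X_t = y, X_s \notin A_s for all s < t ) *)
Fixpoint avoid (P : S -> S -> R) (x : S) (A : nat -> {set S}) (t : nat) : S -> R :=
  match t with
  | 0 => fun y => (y == x)%:R
  | t'.+1 => fun y => \sum_(z : S) (z \notin A t')%:R * avoid P x A t' z * P z y
  end.

(* P_x( tau_A = t ), tau_A = inf { t >= 0 : X_t \in A_t } *)
Definition hit_prob (P : S -> S -> R) (x : S) (A : nat -> {set S}) (t : nat) : R :=
  \sum_(y in A t) avoid P x A t y.

(* P_x( tau_A = +oo ) = 1 - sum_t P_x(tau_A = t) *)
Definition hit_inf_prob (P : S -> S -> R) (x : S) (A : nat -> {set S}) : \bar R :=
  (1%:E - \sum_(0 <= t <oo) (hit_prob P x A t)%:E)%E.

(* E_x[tau_A] = sum_t t P_x(tau_A = t) + (+oo) * P_x(tau_A = +oo) *)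
Definition exp_hit (P : S -> S -> R) (x : S) (A : nat -> {set S}) : \bar R :=
  (\sum_(0 <= t <oo) (t%:R * hit_prob P x A t)%:E
   + (if (0 < hit_inf_prob P x A)%E then +oo else 0))%E.

Definition tmov (P : S -> S -> R) (pi : S -> R) (alpha : R) : \bar R :=
  ereal_sup [set v | exists (x : S) (A : nat -> {set S}),
     (forall t, alpha <= mass pi (A t)) /\ v = exp_hit P x A].

End MC.

(* Main.v *)
Require Import Defs.
From HB Require Import structures.
From mathcomp Require Import all_boot all_order all_algebra.
From mathcomp Require Import all_classical all_reals all_analysis.
From mathcomp Require Import ring lra zify.
Import Order.TTheory GRing.Theory Num.Theory.
Local Open Scope ring_scope.
Set Implicit Arguments. Unset Strict Implicit. Unset Printing Implicit Defensive.
Section Basic.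
Variables (R : realType) (S : finType) (P : S -> S -> R).
Hypothesis HP : stochastic P.

Lemma Pow_ge0 t x y : 0 <= Pow P t x y.
Proof.
elim: t x y => [|t IH] x y /=; first by rewrite ler0n.
apply: sumr_ge0 => z _; apply: mulr_ge0 => //; exact: HP.1.
Qed.

Lemma Pow_sum1 t x : \sum_y Pow P t x y = 1.
Proof.
elim: t x => [|t IH] x /=.
  rewrite (bigD1 x) //= eqxx big1 ?addr0 // => y /negbTE; by rewrite eq_sym => ->.
rewrite exchange_big /= -(IH x); apply: eq_bigr => z _.
by rewrite -mulr_sumr HP.2 mulr1.
Qed.

Lemma Pow_add s t x y :
  Pow P (s + t) x y = \sum_z Pow P s x z * Pow P t z y.
Proof.
elim: t y => [|t IH] y /=.
  rewrite addn0 (bigD1 y) //= eqxx mulr1 big1 ?addr0 // => z /negbTE.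
  by rewrite eq_sym => ->; rewrite mulr0.
rewrite addnS /=.
under eq_bigr do rewrite IH mulr_suml.
rewrite exchange_big /=; apply: eq_bigr => z _.
by rewrite mulr_sumr; apply: eq_bigr => w _; rewrite mulrA.
Qed.

Lemma Pow1 x y : Pow P 1 x y = P x y.
Proof.
rewrite /= (bigD1 x) //= eqxx mul1r big1 ?addr0 // => z /negbTE.
by rewrite eq_sym => ->; rewrite mul0r.
Qed.

Lemma PowSl t x y : Pow P t.+1 x y = \sum_z P x z * Pow P t z y.
Proof. by rewrite -add1n Pow_add; under eq_bigr do rewrite Pow1. Qed.

Lemma pi_Pow (pi : S -> R) : stationary P pi ->
  forall t y, \sum_x pi x * Pow P t x y = pi y.
Proof.
move=> [_ [_ Hs]] t; elim: t => [|t IH] y /=.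
  rewrite (bigD1 y) //= eqxx mulr1 big1 ?addr0 // => z /negbTE ->.
  by rewrite mulr0.
rewrite -Hs; under eq_bigr do rewrite mulr_sumr.
rewrite exchange_big /=; apply: eq_bigr => z _.
by rewrite -IH mulr_suml; apply: eq_bigr => w _; rewrite mulrA.
Qed.

End Basic.
Section TV.
Variables (R : realType) (S : finType).
Implicit Types (mu nu : S -> R).

Lemma tv_ge0 mu nu : 0 <= tv mu nu.
Proof. by rewrite /tv mulr_ge0 // ?invr_ge0 ?ler0n //; apply: sumr_ge0. Qed.

Lemma tv_sym mu nu : tv mu nu = tv nu mu.
Proof. by rewrite /tv; congr (_ * _); apply: eq_bigr => y _; rewrite distrC. Qed.

Lemma tv_tri mu nu rho : tv mu rho <= tv mu nu + tv nu rho.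
Proof.
rewrite /tv -mulrDr ler_wpM2l ?invr_ge0 ?ler0n // -big_split /=.
by apply: ler_sum => y _; rewrite (le_trans _ (ler_normD _ _)) // addrA subrK.
Qed.

Lemma norm_max (u : R) : `|u| = 2 * Num.max u 0 - u.
Proof.
case: (leP 0 u) => h; first by rewrite ger0_norm //; lra.
by rewrite ltr0_norm //; lra.
Qed.

Lemma sum_max (u : S -> R) : \sum_y u y = 0 ->
  \sum_y Num.max (u y) 0 = 2^-1 * \sum_y `|u y|.
Proof.
move=> h0; under [in RHS]eq_bigr do rewrite norm_max.
by rewrite sumrB h0 subr0 -mulr_sumr mulrA mulVf ?mul1r.
Qed.

Lemma tv_max mu nu : \sum_y mu y = 1 -> \sum_y nu y = 1 ->
  tv mu nu = \sum_y Num.max (mu y - nu y) 0.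
Proof. by move=> h1 h2; rewrite sum_max // sumrB h1 h2 subrr. Qed.

Lemma tv_set mu nu (A : {set S}) : \sum_y mu y = 1 -> \sum_y nu y = 1 ->
  \sum_(y in A) (mu y - nu y) <= tv mu nu.
Proof.
move=> h1 h2; rewrite tv_max //.
apply: (@le_trans _ _ (\sum_(y in A) Num.max (mu y - nu y) 0)).
  by apply: ler_sum => y _; rewrite le_max lexx.
rewrite [X in _ <= X](bigID (mem A)) /= lerDl; apply: sumr_ge0 => y _.
by rewrite le_max lexx orbT.
Qed.

Lemma tv_setB mu nu : \sum_y mu y = 1 -> \sum_y nu y = 1 ->
  tv mu nu = \sum_(y in [set y | nu y < mu y]) (mu y - nu y).
Proof.
move=> h1 h2; rewrite tv_max // (bigID (mem [set y | nu y < mu y])) /=.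
rewrite [X in _ + X]big1 ?addr0; last first.
  by move=> y; rewrite inE -leNgt -subr_le0 => h; rewrite max_r.
apply: eq_bigr => y; rewrite inE -subr_gt0 => h; by rewrite max_l // ltW.
Qed.

Lemma tv_conv mu (I : finType) (w : I -> R) (nu : I -> S -> R) :
  (forall i, 0 <= w i) -> \sum_i w i = 1 ->
  tv mu (fun y => \sum_i w i * nu i y) <= \sum_i w i * tv mu (nu i).
Proof.
move=> w0 w1; rewrite /tv.
under [X in _ <= X]eq_bigr do rewrite mulrCA.
rewrite -mulr_sumr ler_wpM2l ?invr_ge0 ?ler0n //.
under [X in _ <= X]eq_bigr do rewrite mulr_sumr.
rewrite exchange_big /=; apply: ler_sum => y _.
have -> : mu y - \sum_i w i * nu i y = \sum_i w i * (mu y - nu i y).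
  by symmetry; under eq_bigr do rewrite mulrBr; rewrite sumrB -mulr_suml w1 mul1r.
apply: (le_trans (ler_norm_sum _ _ _)); apply: ler_sum => i _.
by rewrite normrM ger0_norm.
Qed.

Lemma tv_le1 mu nu : (forall y, 0 <= mu y) -> (forall y, 0 <= nu y) ->
  \sum_y mu y = 1 -> \sum_y nu y = 1 -> tv mu nu <= 1.
Proof.
move=> m0 n0 h1 h2; rewrite /tv.
have : \sum_y `|mu y - nu y| <= 2.
  rewrite (_ : 2 = \sum_y mu y + \sum_y nu y); last by rewrite h1 h2.
  rewrite -big_split; apply: ler_sum => y _.
  by rewrite (le_trans (ler_normB _ _)) // !ger0_norm.
lra.
Qed.

Lemma tv_contract mu nu (Q : S -> S -> R) (D : R) :
  \sum_y mu y = 1 -> \sum_y nu y = 1 ->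
  (forall y z, 0 <= Q y z) -> (forall y, \sum_z Q y z = 1) ->
  (forall y y', tv (Q y) (Q y') <= D) ->
  tv (fun z => \sum_y mu y * Q y z) (fun z => \sum_y nu y * Q y z)
    <= tv mu nu * D.
Proof.
move=> h1 h2 Q0 Q1 QD.
pose w y := mu y - nu y.
pose wp y := Num.max (w y) 0.
pose wn y := Num.max (- w y) 0.
have wpn y : w y = wp y - wn y.
  rewrite /wp /wn; case: leP => h; case: leP => h'; lra.
have wabs y : `|w y| = wp y + wn y.
  rewrite /wp /wn; case: (boolP (0 <= w y)) => h0;
    [rewrite ger0_norm // | move: h0; rewrite -ltNge => h0; rewrite ltr0_norm //];
    case: leP => ?; case: leP => ?; lra.
have wp0 y : 0 <= wp y.
  by have := wpn y; have := wabs y; have := ler_norm (w y); have := ler_norm (- w y); rewrite normrN; lra.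
have wn0 y : 0 <= wn y.
  by have := wpn y; have := wabs y; have := ler_norm (w y); have := ler_norm (- w y); rewrite normrN; lra.
set d := \sum_y wp y.
have sw : \sum_y w y = 0 by rewrite sumrB h1 h2 subrr.
have swn : \sum_y wn y = d.
  have : \sum_y wp y - \sum_y wn y = 0.
    by rewrite -sumrB -[RHS]sw; apply: eq_bigr => y _; rewrite wpn.
  rewrite -/d; lra.
have tvd : tv mu nu = d.
  rewrite /tv; under eq_bigr do rewrite -/(w _) wabs.
  rewrite big_split /= swn -/d; lra.
rewrite tvd.
have d0 : 0 <= d by apply: sumr_ge0.
have key z : d * ((\sum_y mu y * Q y z) - (\sum_y nu y * Q y z)) =
    \sum_y \sum_y' wp y * wn y' * (Q y z - Q y' z).
  have e1 : (\sum_y mu y * Q y z) - (\sum_y nu y * Q y z) =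
      \sum_y wp y * Q y z - \sum_y wn y * Q y z.
    rewrite -!sumrB; apply: eq_bigr => y _.
    by rewrite -!mulrBl -wpn.
  have e2 : \sum_y \sum_y' wp y * wn y' * (Q y z - Q y' z) =
      \sum_y \sum_y' wp y * wn y' * Q y z -
      \sum_y \sum_y' wp y * wn y' * Q y' z.
    rewrite -sumrB; apply: eq_bigr => y _; rewrite -sumrB.
    by apply: eq_bigr => y' _; rewrite mulrBr.
  have e3 : \sum_y \sum_y' wp y * wn y' * Q y z = d * \sum_y wp y * Q y z.
    rewrite mulr_sumr; apply: eq_bigr => y _.
    by rewrite -swn mulr_suml; apply: eq_bigr => y' _; ring.
  have e4 : \sum_y \sum_y' wp y * wn y' * Q y' z = d * \sum_y wn y * Q y z.
    rewrite exchange_big mulr_sumr; apply: eq_bigr => y' _ /=.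
    by rewrite /d mulr_suml; apply: eq_bigr => y _; ring.
  by rewrite e1 e2 e3 e4 mulrBr.
have H : d * tv (fun z => \sum_y mu y * Q y z) (fun z => \sum_y nu y * Q y z)
    <= d * (d * D).
  rewrite /tv mulrCA.
  suff : d * (\sum_z `|\sum_y mu y * Q y z - \sum_y nu y * Q y z|) <= d * (d * (2 * D)).
    by lra.
  rewrite mulr_sumr.
  apply: (@le_trans _ _ (\sum_z \sum_y \sum_y' wp y * wn y' * `|Q y z - Q y' z|)).
    apply: ler_sum => z _.
    rewrite -[X in X * _](ger0_norm d0) -normrM key.
    apply: (le_trans (ler_norm_sum _ _ _)); apply: ler_sum => y _.
    apply: (le_trans (ler_norm_sum _ _ _)); apply: ler_sum => y' _.
    by rewrite normrM ger0_norm // mulr_ge0.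
  rewrite exchange_big /=.
  apply: (@le_trans _ _ (\sum_y \sum_y' wp y * wn y' * (2 * D))).
    apply: ler_sum => y _; rewrite exchange_big /=; apply: ler_sum => y' _.
    rewrite -mulr_sumr ler_wpM2l ?mulr_ge0 //.
    have := QD y y'; rewrite /tv; lra.
  rewrite {1}/d mulr_suml; apply: ler_sum => y _.
  rewrite -{1}swn !mulr_suml mulr_sumr; apply: ler_sum => y' _. 
  by rewrite mulrA.
have [dp|] := ltP 0 d.
  by rewrite -(ler_pM2l dp).
rewrite le_eqVlt ltNge d0 orbF => /eqP dz.
have wp00 y : wp y = 0.
  by move/eqP: dz; rewrite /d psumr_eq0 // => /allP /(_ y (mem_index_enum _)) /eqP.
have wn00 y : wn y = 0.
  by move/eqP: dz; rewrite -swn psumr_eq0 // => /allP /(_ y (mem_index_enum _)) /eqP.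
rewrite /tv big1 ?mulr0 ?dz ?mul0r // => z _.
rewrite -sumrB big1 ?normr0 // => y _.
by rewrite -mulrBl -/(w y) wpn wp00 wn00 subrr mul0r.
Qed.
End TV.
Definition dbar (R : realType) (S : finType) (P : S -> S -> R) (t : nat) : R :=
  \big[Num.max/0]_(x : S) \big[Num.max/0]_(y : S) tv (Pow P t x) (Pow P t y).

Section Dist.
Variables (R : realType) (S : finType) (P : S -> S -> R) (pi : S -> R).
Hypothesis HP : stochastic P.
Hypothesis Hpi : stationary P pi.

Lemma le_dbar t x y : tv (Pow P t x) (Pow P t y) <= dbar P t.
Proof.
apply: le_trans (le_bigmax _ _ x).
exact: (le_bigmax _ (fun y => tv (Pow P t x) (Pow P t y)) y).
Qed.

Lemma dbar_ge0 t : 0 <= dbar P t.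
Proof. exact: bigmax_ge_id. Qed.

Lemma dbar_le1 t : dbar P t <= 1.
Proof.
apply: bigmax_le => // x _; apply: bigmax_le => // y _.
by apply: tv_le1 => *; rewrite ?Pow_sum1 ?Pow_ge0.
Qed.

Lemma dist_ge0 t : 0 <= dist_t P pi t.
Proof. exact: bigmax_ge_id. Qed.

Lemma le_dist t x : tv (Pow P t x) pi <= dist_t P pi t.
Proof. exact: (le_bigmax _ (fun x => tv (Pow P t x) pi) x). Qed.

Lemma dist_le_dbar t : dist_t P pi t <= dbar P t.
Proof.
apply: bigmax_le; first exact: dbar_ge0.
move=> x _.
have -> : pi = (fun y => \sum_z pi z * Pow P t z y).
  by apply/funext => y; rewrite pi_Pow.
apply: (le_trans (tv_conv _ _ _ _)).
- by move=> z; case: Hpi.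
- by case: Hpi => _ [].
apply: (@le_trans _ _ (\sum_z pi z * dbar P t)).
  apply: ler_sum => z _; apply: ler_wpM2l; first by case: Hpi.
  exact: le_dbar.
by rewrite -mulr_suml; case: Hpi => _ [-> _]; rewrite mul1r.
Qed.

Lemma dbar_le_dist t : dbar P t <= 2 * dist_t P pi t.
Proof.
apply: bigmax_le; first by rewrite mulr_ge0 ?dist_ge0.
move=> x _; apply: bigmax_le; first by rewrite mulr_ge0 ?dist_ge0.
move=> y _; apply: (le_trans (tv_tri _ pi _)).
rewrite [tv pi _]tv_sym.
have := le_dist t x; have := le_dist t y; lra.
Qed.

Lemma dbar_mul s t : dbar P (s + t) <= dbar P s * dbar P t.
Proof.
apply: bigmax_le; first by rewrite mulr_ge0 ?dbar_ge0.
move=> x _; apply: bigmax_le; first by rewrite mulr_ge0 ?dbar_ge0.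
move=> y _.
have E z : Pow P (s + t) z = (fun w => \sum_u Pow P s z u * Pow P t u w).
  by apply/funext => w; rewrite Pow_add.
rewrite !E; apply: (le_trans (@tv_contract R S (Pow P s x) (Pow P s y) (Pow P t) (dbar P t)
  (Pow_sum1 HP _ _) (Pow_sum1 HP _ _) (Pow_ge0 HP _) (Pow_sum1 HP _) (le_dbar _))).
by apply: ler_wpM2r; [apply: dbar_ge0 | apply: le_dbar].
Qed.

Lemma dbar_pow k t : dbar P (k * t) <= dbar P t ^+ k.
Proof.
elim: k => [|k IH]; first by rewrite mul0n expr0 dbar_le1.
rewrite mulSn addnC exprSr; apply: (le_trans (dbar_mul _ _)).
by apply: ler_wpM2r; [apply: dbar_ge0 | ].
Qed.

Lemma dist_pow k t : dist_t P pi (k * t) <= (2 * dist_t P pi t) ^+ k.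
Proof.
apply: (le_trans (dist_le_dbar _)); apply: (le_trans (dbar_pow _ _)).
apply: lerXn2r; rewrite ?nnegrE ?dbar_ge0 ?mulr_ge0 ?dist_ge0 //.
exact: dbar_le_dist.
Qed.

End Dist.
Section Avoid.
Variables (R : realType) (S : finType) (P : S -> S -> R).
Hypothesis HP : stochastic P.
Variables (x : S) (A : nat -> {set S}).

Definition surv n := \sum_y avoid P x A n y.
Notation h := (hit_prob P x A).

Lemma avoid_ge0 n y : 0 <= avoid P x A n y.
Proof.
elim: n y => [|n IH] y /=; first by rewrite ler0n.
apply: sumr_ge0 => z _; rewrite !mulr_ge0 ?ler0n //; exact: HP.1.
Qed.

Lemma hit_ge0 n : 0 <= h n.
Proof. by apply: sumr_ge0 => y _; apply: avoid_ge0. Qed.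

Lemma surv_ge0 n : 0 <= surv n.
Proof. by apply: sumr_ge0 => y _; apply: avoid_ge0. Qed.

Lemma surv0 : surv 0 = 1.
Proof.
rewrite /surv /= (bigD1 x) //= eqxx big1 ?addr0 // => y /negbTE -> //.
Qed.

Lemma survS n : surv n.+1 = surv n - h n.
Proof.
rewrite /surv /= exchange_big /=.
have -> : \sum_z \sum_y (z \notin A n)%:R * avoid P x A n z * P z y =
          \sum_z (z \notin A n)%:R * avoid P x A n z.
  by apply: eq_bigr => z _; rewrite -mulr_sumr HP.2 mulr1.
rewrite [in RHS](bigID (mem (A n))) /= /hit_prob addrC addrK.
rewrite [in LHS](bigID (mem (A n))) /= big1 ?add0r.
  by apply: eq_bigr => z /negbTE ->; rewrite mul1r.
by move=> z ->; rewrite mul0r.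
Qed.

Lemma surv_decr n : surv n.+1 <= surv n.
Proof. by rewrite survS lerBlDr lerDl hit_ge0. Qed.

Lemma surv_mono m n : (m <= n)%N -> surv n <= surv m.
Proof.
move=> /subnK <-; elim: (n - m)%N => [|k IH]; first by rewrite add0n.
by rewrite addSn; apply: le_trans IH; apply: surv_decr.
Qed.

Lemma surv_le1 n : surv n <= 1.
Proof. by rewrite -surv0; apply: surv_mono. Qed.

Lemma sum_hit N : \sum_(r < N) h r = 1 - surv N.
Proof.
elim: N => [|N IH]; first by rewrite big_ord0 surv0 subrr.
by rewrite big_ord_recr /= IH survS; ring.
Qed.

Lemma sum_thit N : \sum_(r < N) r%:R * h r + N%:R * surv N =
  \sum_(r < N) surv r.+1.
Proof.
elim: N => [|N IH]; first by rewrite !big_ord0 mul0r addr0.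
rewrite !big_ord_recr /= -IH survS -natr1; ring.
Qed.

End Avoid.
Section ExpHit.
Variables (R : realType) (S : finType) (P : S -> S -> R).
Hypothesis HP : stochastic P.
Variables (x : S) (A : nat -> {set S}).
Local Notation h := (hit_prob P x A).
Local Notation surv := (surv P x A).

Lemma series_hit_ge N :
  ((1 - surv N)%:E <= \sum_(0 <= t <oo) (h t)%:E)%E.
Proof.
have := @nneseries_lim_ge R (fun t => (h t)%:E) xpredT 0 N.
rewrite big_mkord sumEFin sum_hit //; apply => n _ _.
by rewrite lee_fin hit_ge0.
Qed.

Lemma series_hit_le m : (forall N, m <= surv N) ->
  (\sum_(0 <= t <oo) (h t)%:E <= (1 - m)%:E)%E.
Proof.
move=> Hm; apply: lime_le.
  by apply: is_cvg_nneseries => n _ _; rewrite lee_fin hit_ge0.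
apply: nearW => N /=; rewrite big_mkord sumEFin sum_hit // lee_fin.
by have := Hm N; lra.
Qed.

Lemma series_thit_ge0 : (0 <= \sum_(0 <= t <oo) (t%:R * h t)%:E)%E.
Proof.
by apply: nneseries_ge0 => n _ _; rewrite lee_fin mulr_ge0 ?hit_ge0.
Qed.

Lemma partial_thit N : (\sum_(0 <= t < N) (t%:R * h t)%:E)%E =
  (\sum_(r < N) surv r.+1 - N%:R * surv N)%:E.
Proof.
by rewrite big_mkord sumEFin -sum_thit // addrK.
Qed.

Lemma series_thit_ge N :
  ((\sum_(r < N) surv r.+1 - N%:R * surv N)%:E <=
    \sum_(0 <= t <oo) (t%:R * h t)%:E)%E.
Proof.
have := @nneseries_lim_ge R (fun t => (t%:R * h t)%:E) xpredT 0 N.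
rewrite partial_thit; apply => n _ _.
by rewrite lee_fin mulr_ge0 ?hit_ge0.
Qed.

Lemma exp_hit_le (B : R) : (forall N, \sum_(r < N) surv r.+1 <= B) ->
  (forall m, 0 < m -> exists N, surv N <= m) ->
  (exp_hit P x A <= B%:E)%E.
Proof.
move=> HB H0; rewrite /exp_hit.
have -> : (0 < hit_inf_prob P x A)%E = false.
  apply/negbTE; rewrite -leNgt /hit_inf_prob.
  rewrite lee_subel_addr // add0e.
  apply/lee_subgt0Pr => e e0.
  have [N HN] := H0 e e0.
  by apply: le_trans (series_hit_ge N); rewrite -EFinB lee_fin; lra.
rewrite adde0; apply: lime_le.
  by apply: is_cvg_nneseries => n _ _; rewrite lee_fin mulr_ge0 ?hit_ge0.
apply: nearW => N /=; rewrite partial_thit lee_fin.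
have := HB N; have := surv_ge0 HP x A N.
have : 0 <= N%:R :> R by [].
nra.
Qed.

Lemma exp_hit_ge t :
  ((t.+1%:R * surv t.+1)%:E <= exp_hit P x A)%E.
Proof.
rewrite /exp_hit.
case: (pselect (forall m, 0 < m -> exists N, surv N <= m)) => H0; last first.
  move/existsNP: H0 => [m /not_implyP [m0 /forallNP Hm]].
  have Hm' N : m <= surv N by have := Hm N; rewrite leNgt => /negP; rewrite negbK => /ltW.
  have -> : (0 < hit_inf_prob P x A)%E = true.
    rewrite /hit_inf_prob; apply: (@lt_le_trans _ _ (m%:E)); first by rewrite lte_fin.
    rewrite lee_suber_addl //.
    apply: le_trans (leeD2r _ (series_hit_le Hm')) _.
    by rewrite -EFinD lee_fin; lra.
  by rewrite addey ?leey // gt_eqF // (lt_le_trans _ series_thit_ge0).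
apply: lee_paddr; first by case: ifP.
apply/lee_subgt0Pr => e e0.
have [N HN] := H0 (e / t.+1%:R) (divr_gt0 e0 (ltr0Sn _ _)).
pose M := maxn N t.+1.
have HM : surv M <= e / t.+1%:R.
  apply: le_trans HN; by apply: surv_mono => //; rewrite /M leq_maxl.
apply: (le_trans _ (series_thit_ge M)); rewrite -EFinB lee_fin.
have tM : (t.+1 <= M)%N by rewrite /M leq_maxr.
have -> : \sum_(r < M) surv r.+1 - M%:R * surv M = \sum_(0 <= r < M) (surv r.+1 - surv M).
  by rewrite big_mkord sumrB sumr_const card_ord mulr_natl.
rewrite (@big_cat_nat _ _ _ t.+1 0 M) //=.
have H2 : 0 <= \sum_(t.+1 <= r < M) (surv r.+1 - surv M).
  rewrite big_nat_cond; apply: sumr_ge0 => r /andP [/andP [_ rM] _].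
  by rewrite subr_ge0; apply: surv_mono.
have H1 : \sum_(0 <= r < t.+1) (surv t.+1 - surv M) <= \sum_(0 <= r < t.+1) (surv r.+1 - surv M).
  rewrite big_nat_cond [X in _ <= X]big_nat_cond; apply: ler_sum => r /andP [/andP [_ rt] _].
  by rewrite lerD2r; apply: surv_mono.
move: H1; rewrite sumr_const_nat subn0 => H1.
have H3 : t.+1%:R * surv M <= e.
  by rewrite -(ler_pM2l (ltr0Sn R t)) in HM; move: HM; rewrite mulrCA divff ?mulr1 // pnatr_eq0.
rewrite -mulr_natl mulrBr in H1. lra.
Qed.

End ExpHit.
Lemma geom_sum (R : realType) (a : nat -> R) (K : nat) (g : R) :
  (forall n, 0 <= a n) -> (forall n, a n <= 1) -> 0 <= g ->
  (forall n, a (n + K)%N <= g * a n) ->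
  forall N, (1 - g) * \sum_(r < N) a r <= K%:R.
Proof.
move=> a0 a1 g0 aK.
have T N : \sum_(r < N) a r - g * \sum_(r < (N - K)%N) a r <= K%:R.
  elim: N => [|N IH]; first by rewrite sub0n !big_ord0 mulr0 subr0.
  case: (ltnP N K) => hN.
    have -> : (N.+1 - K = 0)%N by apply/eqP; rewrite subn_eq0.
    rewrite big_ord0 mulr0 subr0.
    apply: (@le_trans _ _ (\sum_(r < N.+1) (1 : R))).
      by apply: ler_sum => r _.
    by rewrite sumr_const card_ord ler_nat.
  rewrite subSn // !big_ord_recr /=.
  have := aK (N - K)%N; rewrite subnK // => h.
  move: IH; set s1 := \sum_(i < N) a i; set s2 := \sum_(i < N - K) a i.
  move=> IH; nra.
move=> N; apply: le_trans (T N).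
rewrite mulrBl mul1r lerD2l lerN2; apply: ler_wpM2l => //.
have mono n m : (n <= m)%N -> \sum_(r < n) a r <= \sum_(r < m) a r.
  move=> /subnK <-; rewrite addnC big_split_ord /= lerDl.
  by apply: sumr_ge0.
by apply: mono; rewrite leq_subr.
Qed.
Section Chain.
Variables (R : realType) (S : finType) (P : S -> S -> R).
Hypothesis HP : stochastic P.
Variables (x : S) (A : nat -> {set S}).
Local Notation surv := (surv P x A).
Local Notation av := (avoid P x A).

Lemma avoid_Pow n j w : av (n + j) w <= \sum_y av n y * Pow P j y w.
Proof.
elim: j w => [|j IH] w.
  rewrite addn0 /= (bigD1 w) //= eqxx mulr1 big1 ?addr0 // => y /negbTE.
  by rewrite eq_sym => ->; rewrite mulr0.
rewrite addnS /=.
apply: (@le_trans _ _ (\sum_z (\sum_y av n y * Pow P j y z) * P z w)).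
  apply: ler_sum => z _; apply: ler_wpM2r; first exact: HP.1.
  apply: (le_trans _ (IH z)).
  by case: (z \notin A (n + j)); rewrite ?mul1r ?mul0r ?avoid_ge0.
under [X in X <= _]eq_bigr do rewrite mulr_suml.
rewrite exchange_big /=; apply: ler_sum => y _; rewrite mulr_sumr.
by apply: ler_sum => z _; rewrite mulrA.
Qed.

Lemma survS_notin k : surv k.+1 = \sum_(w | w \notin A k) av k w.
Proof.
rewrite survS // /surv /hit_prob (bigID (mem (A k))) /=; ring.
Qed.

Lemma surv_step n L :
  surv (n + L).+1 <= \sum_y av n y * (1 - \sum_(w in A (n + L)) Pow P L y w).
Proof.
rewrite survS_notin.
apply: (@le_trans _ _ (\sum_(w | w \notin A (n + L)) \sum_y av n y * Pow P L y w)).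
  by apply: ler_sum => w _; apply: avoid_Pow.
rewrite exchange_big /=; apply: ler_sum => y _.
rewrite -mulr_sumr; apply: ler_wpM2l; first exact: avoid_ge0.
by rewrite -(Pow_sum1 HP L y) (bigID (mem (A (n + L))) xpredT) /= addrC addrK.
Qed.

End Chain.
Section PartL.
Variables (R : realType) (S : finType) (P : S -> S -> R) (pi : S -> R).
Hypothesis HP : stochastic P.
Hypothesis Hpi : stationary P pi.

Lemma mass_Pow_ge L y (B : {set S}) :
  mass pi B - dist_t P pi L <= \sum_(w in B) Pow P L y w.
Proof.
have := @tv_set R S pi (Pow P L y) B.
rewrite tv_sym => /(_ (proj1 (proj2 Hpi)) (Pow_sum1 HP L y)).
rewrite sumrB /mass => h; have := le_dist P pi L y; lra.
Qed.

Lemma exp_hit_boundL (alpha : R) (L : nat) x A :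
  0 < alpha -> alpha <= 1 -> dist_t P pi L <= alpha / 2 ->
  (forall t, alpha <= mass pi (A t)) ->
  (exp_hit P x A <= (L.+1%:R / (alpha / 2))%:E)%E.
Proof.
move=> a0 a1 hd hA.
have a2 : 0 < alpha / 2 by rewrite divr_gt0.
have step n : surv P x A (n + L.+1) <= (1 - alpha / 2) * surv P x A n.
  rewrite addnS; apply: le_trans (surv_step HP x A n L) _.
  rewrite /surv mulr_sumr; apply: ler_sum => y _.
  rewrite mulrC; apply: ler_wpM2r; first exact: avoid_ge0.
  have := mass_Pow_ge L y (A (n + L)%N); have := hA (n + L)%N; lra.
have G := @geom_sum R (surv P x A) L.+1 (1 - alpha / 2)
  (surv_ge0 HP x A) (surv_le1 HP x A) ltac:(lra) step.
have G' N : \sum_(r < N) surv P x A r <= L.+1%:R / (alpha / 2).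
  by rewrite ler_pdivlMr // mulrC; have := G N; rewrite opprB addrC subrK.
apply: exp_hit_le => //.
  move=> N; apply: le_trans (G' N); apply: ler_sum => r _.
  exact: surv_decr.
move=> m m0.
set B := L.+1%:R / (alpha / 2).
have B0 : 0 < B by rewrite divr_gt0.
exists (Num.truncn (B / m)).+1.
set N := (Num.truncn (B / m)).+1.
have NB : B / m < N%:R by apply: truncnS_gt.
have N0 : 0 < N%:R :> R by rewrite ltr0n.
have : N%:R * surv P x A N <= B.
  apply: le_trans (G' N).
  have -> : N%:R * surv P x A N = \sum_(r < N) surv P x A N.
    by rewrite sumr_const card_ord mulr_natl.
  apply: ler_sum => r _; apply: surv_mono => //; exact: ltnW.
rewrite ltr_pdivrMr // in NB.
move=> h; have := surv_ge0 HP x A N; nra.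
Qed.

Lemma exp_hit_zero x (A : nat -> {set S}) : x \in A 0%N -> (exp_hit P x A <= 0%:E)%E.
Proof.
move=> xA.
have s1 : surv P x A 1 = 0.
  rewrite survS_notin //= big1 // => w wA.
  by case: eqP => // ew; move: wA; rewrite ew xA.
apply: exp_hit_le => //.
  move=> N; rewrite big1 // => r _; apply/eqP; rewrite eq_le surv_ge0 // andbT.
  by rewrite -s1; apply: surv_mono.
by move=> m m0; exists 1%N; rewrite s1 ltW.
Qed.

End PartL.
Section PartU.
Variables (R : realType) (S : finType) (P : S -> S -> R) (pi : S -> R).
Hypothesis HP : stochastic P.
Hypothesis Hpi : stationary P pi.
Variables (t : nat) (B : {set S}).

Definition ff (s : nat) (y : S) := \sum_(z in B) Pow P (t - s) y z.

Lemma ff_ge0 s y : 0 <= ff s y.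
Proof. by apply: sumr_ge0 => z _; apply: Pow_ge0. Qed.

Lemma ff_le1 s y : ff s y <= 1.
Proof.
rewrite -(Pow_sum1 HP (t - s) y) /ff [X in _ <= X](bigID (mem B)) /= lerDl.
by apply: sumr_ge0 => z _; apply: Pow_ge0.
Qed.

Lemma ffS s y : (s < t)%N -> ff s y = \sum_w P y w * ff s.+1 w.
Proof.
move=> st; rewrite /ff -(subnSK st).
under eq_bigr do rewrite PowSl.
rewrite exchange_big /=; apply: eq_bigr => w _; rewrite mulr_sumr.
done.
Qed.

Lemma pi_ff s : \sum_y pi y * ff s y = mass pi B.
Proof.
rewrite /ff /mass; under eq_bigr do rewrite mulr_sumr.
rewrite exchange_big /=; apply: eq_bigr => z _.
exact: pi_Pow.
Qed.

Variables (x : S) (A : nat -> {set S}).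
Local Notation av := (avoid P x A).

Lemma optional s : (s <= t)%N ->
  \sum_y av s y * ff s y + \sum_(r < s) \sum_(y in A r) av r y * ff r y = ff 0 x.
Proof.
elim: s => [|s IH] st.
  rewrite big_ord0 addr0 /= (bigD1 x) //= eqxx mul1r big1 ?addr0 // => y /negbTE ->.
  by rewrite mul0r.
rewrite -IH ?(ltnW st) // big_ord_recr /=.
have -> : \sum_y av s.+1 y * ff s.+1 y = \sum_(z | z \notin A s) av s z * ff s z.
  rewrite /=; under eq_bigr do rewrite mulr_suml.
  rewrite exchange_big /= [in RHS]big_mkcond /=; apply: eq_bigr => z _.
  rewrite (ffS _ st) mulr_sumr.
  case: (z \notin A s); rewrite ?mul1r ?mul0r.
    by apply: eq_bigr => y _; rewrite mulrA.
  by rewrite big1 // => y _; rewrite !mul0r.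
rewrite [\sum_y av s y * ff s y](bigID (mem (A s))) /=; ring.
Qed.

Lemma hit_bound (h : R) : 0 <= h -> (forall r y, y \in A r -> h <= ff r y) ->
  h * (1 - surv P x A t.+1) <= ff 0 x.
Proof.
move=> h0 hA.
have E r : h * hit_prob P x A r <= \sum_(y in A r) av r y * ff r y.
  rewrite /hit_prob mulr_sumr; apply: ler_sum => y yA.
  by rewrite mulrC; apply: ler_wpM2l; [apply: avoid_ge0 | apply: hA].
have F : \sum_(y in A t) av t y * ff t y <= \sum_y av t y * ff t y.
  rewrite [X in _ <= X](bigID (mem (A t))) /= lerDl.
  by apply: sumr_ge0 => y _; rewrite mulr_ge0 ?avoid_ge0 ?ff_ge0.
rewrite -(sum_hit HP x A t.+1) -(optional (leqnn t)) big_ord_recr /= mulrDr.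
rewrite mulr_sumr addrC lerD //; first by apply: le_trans (E t) F.
by apply: ler_sum => r _; apply: E.
Qed.

End PartU.

Lemma mass_ge (R : realType) (S : finType) (P : S -> S -> R) (pi : S -> R)
  (HP : stochastic P) (Hpi : stationary P pi) t B (alpha h : R) (s : nat) :
  h < 1 -> 1 - mass pi B <= (1 - alpha) * (1 - h) ->
  alpha <= mass pi [set y | h <= ff P t B s y].
Proof.
move=> h1 hq.
set C := [set y | h <= ff P t B s y].
have tot : mass pi C + \sum_(y | y \notin C) pi y = 1.
  by rewrite /mass -(bigID (mem C) xpredT) /=; case: Hpi => _ [].
have H1 : (1 - h) * \sum_(y | y \notin C) pi y <= \sum_y pi y * (1 - ff P t B s y).
  rewrite mulr_sumr [X in _ <= X](bigID (mem C)) /= -[X in X <= _]add0r.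
  apply: lerD.
    apply: sumr_ge0 => y _; rewrite mulr_ge0 ?subr_ge0 ?ff_le1 //; by case: Hpi.
  apply: ler_sum => y; rewrite inE -ltNge => hy.
  rewrite mulrC; apply: ler_wpM2l; first by case: Hpi.
  by rewrite lerB // ltW.
have H2 : \sum_y pi y * (1 - ff P t B s y) = 1 - mass pi B.
  under eq_bigr do rewrite mulrBr mulr1.
  by rewrite sumrB (pi_ff Hpi); case: Hpi => _ [-> _].
rewrite H2 in H1.
have H3 : \sum_(y | y \notin C) pi y <= 1 - alpha.
  rewrite -(@ler_pM2l _ (1 - h)) ?subr_gt0 //.
  by apply: le_trans H1 _; rewrite mulrC.
lra.
Qed.

Definition gam (R : realType) (a : R) := (2 * a + 1) / 4.
Definition eta (R : realType) (a : R) := (gam a - a) / (1 - a).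

Lemma eta_facts (R : realType) (a : R) : 0 < a -> a < 2^-1 ->
  [/\ 0 < eta a, eta a <= 4^-1, eta a * (1 - a) = gam a - a & 4^-1 <= gam a].
Proof.
move=> a0 a1; have a1' : 0 < 1 - a by lra.
rewrite /eta /gam; split.
- by apply: divr_gt0 => //; lra.
- by rewrite ler_pdivrMr //; lra.
- by rewrite divfK // gt_eqF.
- lra.
Qed.

Section MainU.
Variables (R : realType) (S : finType) (P : S -> S -> R) (pi : S -> R).
Hypothesis HP : stochastic P.
Hypothesis Hpi : stationary P pi.

Lemma mass_le1 (B : {set S}) : mass pi B <= 1.
Proof.
case: Hpi => p0 [p1 _]; rewrite -p1 /mass [X in _ <= X](bigID (mem B)) /= lerDl.
by apply: sumr_ge0.
Qed.

Lemma exp_hit_le_tmov alpha x A : (forall r, alpha <= mass pi (A r)) ->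
  (exp_hit P x A <= tmov P pi alpha)%E.
Proof. by move=> hA; apply: ereal_sup_ubound; exists x, A. Qed.

Lemma tmov_lower (alpha : R) t : 0 < alpha -> alpha < 2^-1 ->
  gam alpha < dist_t P pi t ->
  ((t.+1%:R * (eta alpha / 2))%:E <= tmov P pi alpha)%E.
Proof.
move=> a0 a1 hd.
have [e0 e1 e2 g1] := eta_facts a0 a1.
have [x hx] : exists x, gam alpha < tv (Pow P t x) pi.
  apply/not_existsP => hn; move: hd; rewrite ltNge => /negP; apply.
  apply: bigmax_le => [|y _]; first by rewrite /gam; lra.
  by rewrite leNgt; apply/negP => /(hn y).
set B := [set y | Pow P t x y < pi y].
have tvB := @tv_setB R S pi (Pow P t x) (proj1 (proj2 Hpi)) (Pow_sum1 HP t x).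
rewrite tv_sym tvB sumrB -/(mass pi B) in hx.
set p := \sum_(y in B) Pow P t x y in hx.
have pf : p = ff P t B 0 x by rewrite /ff subn0.
have p0 : 0 <= p by rewrite pf ff_ge0.
have q1 := mass_le1 B.
set h := p + eta alpha / 2.
pose A r := [set y | h <= ff P t B r y].
have h1 : h < 1 by rewrite /h; lra.
have hq : 1 - mass pi B <= (1 - alpha) * (1 - h).
  rewrite /h; have := mulr_ge0 (ltW a0) p0; nra.
have hA r : alpha <= mass pi (A r) by apply: (mass_ge HP Hpi).
have hb : h * (1 - surv P x A t.+1) <= ff P t B 0 x.
  by apply: hit_bound => //; [rewrite /h; lra | move=> r y; rewrite inE].
rewrite -pf in hb.
have s0 := surv_ge0 HP x A t.+1.
have hs : eta alpha / 2 <= surv P x A t.+1.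
  rewrite /h in hb h1; nra.
apply: (@le_trans _ _ (exp_hit P x A)); last exact: exp_hit_le_tmov.
apply: (@le_trans _ _ ((t.+1%:R * surv P x A t.+1)%:E)); last exact: exp_hit_ge.
by rewrite lee_fin ler_wpM2l.
Qed.

End MainU.
Lemma small_pow (R : realType) (r e : R) : 0 <= r -> r < 1 -> 0 < e ->
  exists k, r ^+ k.+1 <= e.
Proof.
move=> r0 r1 e0.
have hr : `|r| < 1 by rewrite ger0_norm.
have := cvg_expr hr => /cvgr_dist_lt /(_ e e0) [N _ HN].
exists N; have := HN N.+1 (leqnSn N).
by rewrite sub0r normrN ger0_norm ?exprn_ge0 // => /ltW.
Qed.

Lemma dbar0_zero (R : realType) (S : finType) (P : S -> S -> R) (pi : S -> R) :
  stochastic P -> stationary P pi -> dist_t P pi 0 <= 4^-1 -> dist_t P pi 0 <= 0.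
Proof.
move=> HP Hpi hd.
have h1 := dbar_le_dist P pi 0.
have h2 := dbar_mul HP 0 0; rewrite addn0 in h2.
have h3 : 0 <= dbar P 0 by apply: dbar_ge0.
have h4 := dist_le_dbar Hpi 0.
have : dbar P 0 <= 0 by nra.
lra.
Qed.

Lemma natineq k t : (k.+1 * t.+1 < t.+1 * k.+2)%N.
Proof. lia. Qed.

Lemma fieldaux (R : realType) (a K X : R) : a != 0 -> K != 0 -> a / K * (X / a) = X / K.
Proof. by move=> ha hK; rewrite mulrC mulrA divfK. Qed.

Unset Implicit Arguments.

Theorem theorem1p1 (R : realType) (alpha : R) :
  0 < alpha -> alpha < 2^-1 ->
  exists c C : R, 0 < c /\ 0 < C /\
    forall (S : finType) (P : S -> S -> R) (pi : S -> R),
      stochastic P -> irreducible P -> stationary P pi ->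
      (c%:E * tmov P pi alpha <= tmix P pi)%E /\
      (tmix P pi <= C%:E * tmov P pi alpha)%E.
Proof.
move=> a0 a1.
have [e0 e1 e2 g1] := eta_facts a0 a1.
have [kL hkL] := @small_pow R (2^-1) (alpha / 2) ltac:(lra) ltac:(lra) ltac:(lra).
have [kU hkU] := @small_pow R (2 * gam alpha) (4^-1)
  ltac:(rewrite /gam; lra) ltac:(rewrite /gam; lra) ltac:(lra).
set c := (alpha / 2) / (kL.+2)%:R.
set C := kU.+1%:R / (eta alpha / 2).
have c0 : 0 < c by rewrite divr_gt0 //; lra.
have C0 : 0 < C by rewrite divr_gt0 //; lra.
exists c, C; split => //; split => // S P pi HP _ Hpi.
split.
- apply: le_ereal_inf_tmp => _ [t /= ht <-].
  case: t ht => [|t] ht.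
  + have hd0 := dbar0_zero HP Hpi ht.
    have : (tmov P pi alpha <= 0%:E)%E.
      apply: ge_ereal_sup => _ [x [A [hA ->]]].
      apply: exp_hit_zero => //.
      case: (boolP (x \in A 0%N)) => // xA.
      have := mass_Pow_ge HP Hpi 0 x (A 0%N).
      rewrite big1 => [|w wA]; last first.
        by rewrite /=; case: eqP => // ew; move: xA; rewrite ew wA.
      have := hA 0%N; lra.
    move=> H; apply: le_trans (lee_wpmul2l _ H) _.
      by rewrite lee_fin ltW.
    by rewrite mule0.
  + set L := (kL.+1 * t.+1)%N.
    have hL : dist_t P pi L <= alpha / 2.
      apply: le_trans (dist_pow HP Hpi kL.+1 t.+1) _.
      apply: le_trans hkL.
      apply: lerXn2r; [by rewrite nnegrE mulr_ge0 ?dist_ge0 | by rewrite nnegrE invr_ge0 | lra].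
    have : (tmov P pi alpha <= ((L.+1%:R / (alpha / 2))%R)%:E)%E.
      apply: ge_ereal_sup => _ [x [A [hA ->]]].
      by apply: (exp_hit_boundL HP Hpi) => //; lra.
    move=> H; apply: le_trans (lee_wpmul2l _ H) _.
      by rewrite lee_fin ltW.
    rewrite -EFinM lee_fin /c /L.
    have K0 : (kL.+2%:R : R) != 0 by rewrite pnatr_eq0.
    have a2 : alpha / 2 != 0 by rewrite gt_eqF //; lra.
    rewrite fieldaux //.
    rewrite ler_pdivrMr ?ltr0n // -natrM ler_nat.
    exact: natineq.
- have [x0 _] : exists x : S, true.
    case: (pickP (fun _ : S => true)) => [x0 _|H]; first by exists x0.
    exfalso; move: (proj1 (proj2 Hpi)); rewrite big_pred0 //.
    by move=> /eqP; rewrite eq_sym oner_eq0.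
  have T0 : (0%:E <= tmov P pi alpha)%E.
    have hA : forall r : nat, alpha <= mass pi ((fun _ => [set: S]) r).
      move=> r; rewrite /mass.
      have -> : \sum_(y in [set: S]) pi y = 1.
        by rewrite -(proj1 (proj2 Hpi)); apply: eq_bigl => y; rewrite inE.
      lra.
    apply: (@le_trans _ _ (exp_hit P x0 (fun _ => [set: S]))); last exact: exp_hit_le_tmov.
    apply: (@le_trans _ _ ((1%:R * surv P x0 (fun _ => [set: S]) 1)%:E)); last exact: exp_hit_ge.
    by rewrite lee_fin mulr_ge0 ?surv_ge0.
  case E : (tmov P pi alpha) T0 => [r| |] T0 //; last first.
    by rewrite gt0_muley ?lte_fin // leey.
  rewrite lee_fin in T0.
  set d := eta alpha / 2.
  have d0 : 0 < d by rewrite /d; lra.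
  set t0 := Num.truncn (r / d).
  have hd : dist_t P pi t0 <= gam alpha.
    rewrite leNgt; apply/negP => hlt.
    have := tmov_lower HP Hpi a0 a1 hlt; rewrite E lee_fin -/d => h.
    have := truncnS_gt (r / d); rewrite -/t0 ltr_pdivrMr // => h'.
    lra.
  have hmix : dist_t P pi (kU.+1 * t0) <= 4^-1.
    apply: le_trans (dist_pow HP Hpi kU.+1 t0) _.
    apply: le_trans hkU.
    apply: lerXn2r; [by rewrite nnegrE mulr_ge0 ?dist_ge0 | | lra].
    by rewrite nnegrE mulr_ge0 // /gam; lra.
  apply: (@le_trans _ _ ((kU.+1 * t0)%:R)%:E).
    by apply: ereal_inf_lbound; exists (kU.+1 * t0)%N.
  rewrite -EFinM lee_fin /C natrM.
  have ht0 : t0%:R <= r / d by rewrite /t0 truncn_le divr_ge0 // ltW.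
  rewrite mulrAC -mulrA; apply: ler_wpM2l => //.
Qed.
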